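(* Let $G$ be a finite group with exactly $4$ irrational conjugacy classes, let $n = \exp(G)$, and let $\varphi: \mathrm{Gal}(\mathbb{Q}_n:\mathbb{Q}) \to S_4$ be the homomorphism corresponding to the Galois action on the four irrational classes (identified with $\{1,2,3,4\}$). Then, unless the image of $\varphi$ is the Klein four-group $\{1,(12)(34),(13)(24),(14)(23)\} \trianglelefteq S_4$, $G$ has exactly $4$ irrational irreducible characters.
   Context: $\exp(G)$ is the smallest positive integer $m$ with $g^m=1$ for all $g\in G$. $\mathbb{Q}_n = \mathbb{Q}(\zeta)$ with $\zeta$ a primitive $n$-th root of unity. Each $\sigma \in \mathrm{Gal}(\mathbb{Q}_n:\mathbb{Q})$ satisfies $\sigma(\zeta)=\zeta^{r_\sigma}$ for a unique $0<r_\sigma<n$ coprime to $n$; $\sigma$ acts on complex irreducible characters by $(\sigma\chi)(g)=\sigma(\chi(g))$ and on conjugacy classes by $\sigma\cdot x^G = (x^{r_\sigma})^G$, so that $(\sigma\chi)(x)=\chi(\sigma\cdot x)$. A conjugacy class is irrational if some irreducible character takes a non-rational value on it (equivalently, it is not fixed by the Galois action); rational classes are fixed, so the Galois group permutes the irrational classes. An irreducible character is irrational if some of its values are not rational. *)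

(* Defs.v *)
From HB Require Import structures.
From mathcomp Require Import all_boot all_order all_algebra all_fingroup all_solvable all_field all_character.
Set Implicit Arguments. Unset Strict Implicit. Unset Printing Implicit Defensive.
Import GRing.Theory Num.Theory.
Local Open Scope group_scope.

Definition irrational_class (gT : finGroupType) (G : {group gT}) (C : {set gT}) : bool :=
  (C \in classes G) && [exists i : Iirr G, ('chi_i (repr C) \notin Crat)%R].

Definition irr_classes (gT : finGroupType) (G : {group gT}) : {set {set gT}} :=
  [set C in classes G | irrational_class G C].

Definition irrational_char (gT : finGroupType) (G : {group gT}) (i : Iirr G) : bool :=
  [exists x in G, ('chi_i x \notin Crat)%R].

(* Image of phi : Gal(Q_n/Q) -> S_4, where n = exp(G), the Galois automorphism
   sigma with sigma(zeta) = zeta^r (r coprime to n) acting on classes by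
   x^G |-> (x^r)^G, and the irrational classes identified with 'I_4 via e. *)
Definition phi_image (gT : finGroupType) (G : {group gT}) (e : 'I_4 -> {set gT})
  : {set 'S_4} :=
  [set s : 'S_4 | [exists r : 'I_(exponent G),
      coprime r (exponent G) &&
      [forall i : 'I_4, e (s i) == (repr (e i) ^+ r) ^: G]]].

Arguments irrational_char {gT} G i.

Definition o4 (k : nat) : 'I_4 := inord k.

Definition Klein4 : {set 'S_4} :=
  [set 1; tperm (o4 0) (o4 1) * tperm (o4 2) (o4 3);
          tperm (o4 0) (o4 2) * tperm (o4 1) (o4 3);
          tperm (o4 0) (o4 3) * tperm (o4 1) (o4 2)].

(* Main.v *)
Require Import Defs.
From HB Require Import structures.
From mathcomp Require Import all_boot all_order all_algebra all_fingroup all_solvable all_field all_character.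
Set Implicit Arguments. Unset Strict Implicit. Unset Printing Implicit Defensive.
Import GRing.Theory Num.Theory.
Local Open Scope group_scope.
Local Open Scope ring_scope.
Section Char.
Variables (gT : finGroupType) (G : {group gT}).
Local Notation n := (exponent G).

Lemma P1 (u : {rmorphism algC -> algC}) (k : nat) :
  (forall z : algC, z ^+ n = 1 -> u z = z ^+ k) ->
  forall (chi : 'CF(G)), chi \is a character -> forall x, x \in G -> u (chi x) = chi (x ^+ k)%g.
Proof.
move=> Hu chi Nchi x Gx.
have sXG : <[x]> \subset G by rewrite cycle_subG.
have Xx : x \in <[x]> := cycle_id x.
have Xxk : (x ^+ k)%g \in <[x]> := mem_cycle x k.
rewrite -(cfResE chi sXG Xx) -(cfResE chi sXG Xxk).
have [r ->] := char_sum_irr (cfRes_char <[x]> Nchi).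
rewrite !sum_cfunE rmorph_sum; apply: eq_bigr => i _.
have Li : 'chi_i \is a linear_char by rewrite irr_cyclic_lin ?cycle_cyclic.
rewrite lin_charX // Hu //.
rewrite -lin_charX // -(lin_char1 Li); congr ('chi_i _).
by rewrite expg_exponent.
Qed.

Lemma P2 (nu : {rmorphism algC -> algC}) :
  exists k : nat, coprime k n /\ forall z : algC, z ^+ n = 1 -> nu z = z ^+ k.
Proof.
have [z prim_z] := C_prim_root_exists (exponent_gt0 G).
have pr_nu : n.-primitive_root (nu z) by rewrite fmorph_primitive_root.
have [i Di] := prim_rootP prim_z (prim_expr_order pr_nu).
exists i; split.
  by rewrite -(prim_root_exp_coprime _ prim_z) -Di.
move=> w /(prim_rootP prim_z) [j ->].
by rewrite rmorphXn /= Di -!exprM mulnC.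
Qed.

Lemma P3 (chi : 'CF(G)) x : chi \is a character -> x \in G -> chi x \notin Crat ->
  exists nu : {rmorphism algC -> algC}, nu (chi x) != chi x.
Proof.
move=> Nchi Gx nQ.
have [Qn galQn [QnC gQnC [w _ QnG]]] := group_num_field_exists G.
have [a Da] := QnG _ G _ Nchi x (order_dvdG Gx).
have : a \notin fixedField 'Gal({:Qn} / 1).
  rewrite (galois_fixedField galQn); apply: contra nQ; rewrite -Da => /vlineP [q ->].
  by rewrite rmorphZ_num rmorph1 mulr1 Crat_rat.
move=> nF.
have [/exists_inP [sig Gsig nfix] | /exists_inPn allfix] :=
  boolP [exists sig in 'Gal({:Qn} / 1), sig a != a]; last first.
  by case: (negP nF); apply/fixedFieldP; [exact: memvf | move=> s /allfix /negPn /eqP].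
have [nu Dnu] := gQnC sig.
exists nu; rewrite -Da -Dnu.
by apply: contra nfix => /eqP /fmorph_inj ->.
Qed.

Lemma P4 i x : x \in G ->
  ('chi[G]_i x \notin Crat) = [exists k : 'I_n, coprime k n && ('chi_i (x ^+ k)%g != 'chi_i x)].
Proof.
move=> Gx; apply/idP/idP.
  move=> /(P3 (irr_char i) Gx) [nu Hnu].
  have [k [cop Hk]] := P2 nu.
  have lt : (k %% n < n)%N by rewrite ltn_mod exponent_gt0.
  apply/existsP; exists (Ordinal lt); rewrite /= coprime_modl cop /=.
  by rewrite expg_mod ?expg_exponent // -(P1 Hk) ?irr_char.
case/existsP => k /andP [cop ne]; apply: contra ne => Q.
have [u Hu] := Qn_aut_exists cop.
by rewrite -(P1 Hu) ?irr_char // aut_Crat.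
Qed.

Definition cl (k : nat) (C : {set gT}) := ((repr C) ^+ k) ^: G.
Definition sig (k : nat) (i : Iirr G) :=
  odflt i [pick j : Iirr G | [forall x in G, 'chi_j x == 'chi_i (x ^+ k)%g]].

Lemma sig_u (u : {rmorphism algC -> algC}) k :
  (forall z : algC, z ^+ n = 1 -> u z = z ^+ k) -> forall i, sig k i = aut_Iirr u i.
Proof.
move=> Hu i.
have H1 : forall x, x \in G -> 'chi_(aut_Iirr u i) x = 'chi_i (x ^+ k)%g.
  by move=> x Gx; rewrite aut_IirrE cfunE (P1 Hu) ?irr_char.
rewrite /sig; case: pickP => [j /forall_inP Hj | /(_ (aut_Iirr u i))]; last first.
  by move/forall_inP => []; move=> x Gx; rewrite H1.
apply: irr_inj; apply: cfun_inP => x Gx; rewrite H1 //; exact/eqP/Hj.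
Qed.

Lemma sigE k i : coprime k n -> forall x, x \in G -> 'chi_(sig k i) x = 'chi_i (x ^+ k)%g.
Proof.
move=> cop x Gx; have [u Hu] := Qn_aut_exists cop.
by rewrite (sig_u Hu) aut_IirrE cfunE (P1 Hu) ?irr_char.
Qed.

Lemma sig_inj k : coprime k n -> injective (sig k).
Proof.
move=> cop; have [u Hu] := Qn_aut_exists cop.
by move=> i j; rewrite !(sig_u Hu); apply: aut_Iirr_inj.
Qed.

Lemma sig_eq k k' i : coprime k n -> coprime k' n ->
  (forall x, x \in G -> 'chi_i (x ^+ k)%g = 'chi_i (x ^+ k')%g) -> sig k i = sig k' i.
Proof.
move=> c1 c2 H; apply: irr_inj; apply: cfun_inP => x Gx.
by rewrite !sigE // H.
Qed.

Lemma sigM k k' i : coprime k n -> coprime k' n -> sig (k * k') i = sig k (sig k' i).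
Proof.
move=> c1 c2; apply: irr_inj; apply: cfun_inP => x Gx.
rewrite !sigE ?coprimeMl ?c1 ?c2 ?groupX //.
by rewrite expgM.
Qed.


Lemma cl_class k x : x \in G -> cl k (x ^: G) = (x ^+ k) ^: G.
Proof.
move=> Gx; rewrite /cl; have [y Gy ->] := repr_class G x.
by rewrite -conjXg classGidl.
Qed.

Lemma repr_in C : C \in classes G -> repr C \in G.
Proof. by case/repr_classesP. Qed.

Lemma cl_classes k C : C \in classes G -> cl k C \in classes G.
Proof. by move=> CG; rewrite /cl mem_classes ?groupX ?repr_in. Qed.

Lemma chi_cl (phi : 'CF(G)) k C : phi (repr (cl k C)) = phi (repr C ^+ k)%g.
Proof. by rewrite /cl cfun_repr. Qed.

Lemma cl_inj k C D : coprime k n -> C \in classes G -> D \in classes G ->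
  cl k C = cl k D -> C = D.
Proof.
move=> cop CG DG E; have [u Hu] := Qn_aut_exists cop.
have H (i : Iirr G) : 'chi_i (repr C) = 'chi_i (repr D).
  apply: (fmorph_inj u); rewrite (P1 Hu (irr_char i) (repr_in CG)) (P1 Hu (irr_char i) (repr_in DG)).
  by rewrite -!chi_cl E.
have /class_eqP := (introT (eq_irr_mem_classP (repr C) (repr_in DG))) H.
by case/repr_classesP: CG => _ {2}->; case/repr_classesP: DG => _ {2}->.
Qed.

Lemma cl1 C : C \in classes G -> cl 1 C = C.
Proof. by case/repr_classesP => _ {2}->; rewrite /cl expg1. Qed.

Lemma clM k k' C : C \in classes G -> cl (k * k') C = cl k' (cl k C).
Proof. by move=> CG; rewrite [cl k C]/cl cl_class ?groupX ?repr_in // -expgM. Qed.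

Lemma cl_mod k C : C \in classes G -> cl (k %% n) C = cl k C.
Proof. by move=> CG; rewrite /cl expg_mod // expg_exponent ?repr_in. Qed.

Lemma irr_cl k C : coprime k n -> C \in classes G ->
  irrational_class G (cl k C) = irrational_class G C.
Proof.
move=> cop CG; have [u Hu] := Qn_aut_exists cop.
rewrite /irrational_class cl_classes // CG /=.
apply: eq_existsb => i; rewrite chi_cl -(P1 Hu (irr_char i) (repr_in CG)).
by rewrite Crat_aut.
Qed.

Lemma R3 k C : C \in classes G -> ~~ irrational_class G C -> coprime k n -> cl k C = C.
Proof.
move=> CG; rewrite /irrational_class CG /= negb_exists => /forallP Q cop.
have [u Hu] := Qn_aut_exists cop.
have H (i : Iirr G) : 'chi_i (repr C ^+ k)%g = 'chi_i (repr C).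
  by rewrite -(P1 Hu (irr_char i) (repr_in CG)) aut_Crat // -[_ \in _]negbK Q.
have /class_eqP := (introT (eq_irr_mem_classP (repr C ^+ k)%g (repr_in CG))) H.
by rewrite /cl => ->; case/repr_classesP: CG => _ <-.
Qed.

Lemma R4 C : irrational_class G C -> exists k : 'I_n, coprime k n && (cl k C != C).
Proof.
case/andP => CG /existsP [i nQ].
rewrite (P4 _ (repr_in CG)) in nQ; case/existsP: nQ => k /andP [cop ne].
exists k; rewrite cop /=; apply: contra ne => /eqP E.
by rewrite -chi_cl E.
Qed.

Lemma R1 k i : ~~ irrational_char G i -> coprime k n -> sig k i = i.
Proof.
rewrite /irrational_char negb_exists_in => /forall_inP Q cop.
have [u Hu] := Qn_aut_exists cop.
apply: irr_inj; apply: cfun_inP => x Gx.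
by rewrite sigE // -(P1 Hu (irr_char i) Gx) aut_Crat // -[_ \in _]negbK Q.
Qed.

Lemma R2 i : irrational_char G i -> exists k : 'I_n, coprime k n && (sig k i != i).
Proof.
case/exists_inP => x Gx nQ.
rewrite (P4 _ Gx) in nQ; case/existsP: nQ => k /andP [cop ne].
exists k; rewrite cop /=; apply: contra ne => /eqP E.
by rewrite -sigE // E.
Qed.

Lemma R10 k k' i : coprime k n -> coprime k' n ->
  (forall C, C \in classes G -> cl k C = cl k' C) -> sig k i = sig k' i.
Proof.
move=> c1 c2 H; apply: sig_eq => // x Gx.
rewrite -(cfun_repr _ (x ^+ k)%g) -(cfun_repr _ (x ^+ k')%g).
by rewrite -!cl_class // H ?mem_classes.
Qed.

Lemma tr_perm (m : nat) (s : 'S_m) : \tr (perm_mx s : 'M[algC]_m) = (#|[set i | s i == i]|)%:R.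
Proof.
rewrite -sum1_card natr_sum big_mkcond /=; apply: eq_bigr => i _.
by rewrite /perm_mx !mxE inE; case: (s i == i).
Qed.

Lemma P5 k : coprime k n ->
  #|[set i | sig k i == i]| = #|[set C in classes G | cl k C == C]|.
Proof.
move=> cop.
pose p := perm (sig_inj cop).
have qinj : injective (fun j : Iirr G => class_Iirr G (cl k (irr_class j))).
  move=> j1 j2 /= E.
  apply: (can_inj (@irr_classK _ G)); apply: (cl_inj cop) ; rewrite ?irr_classP //.
  by apply: (can_in_inj (@class_IirrK _ G)); rewrite ?inE ?cl_classes ?irr_classP.
pose q := perm qinj.
have XE : row_perm p (character_table G) = col_perm q (character_table G).
  apply/matrixP => i j; rewrite !mxE !permE /=.
  rewrite class_IirrK ?cl_classes ?irr_classP // chi_cl sigE //.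
  exact: repr_in (irr_classP j).
rewrite row_permE col_permE in XE.
have uX := character_table_unit G.
have E : perm_mx p = character_table G *m perm_mx q^-1 *m invmx (character_table G).
  by rewrite -XE mulmxK.
have T : \tr (perm_mx p : 'M[algC]_(Nirr G)) = \tr (perm_mx q^-1 : 'M[algC]_(Nirr G)).
  by rewrite E mxtrace_mulC mulKmx.
rewrite !tr_perm in T; move/eqP: T; rewrite eqC_nat => /eqP T.
have -> : #|[set i | sig k i == i]| = #|[set i | p i == i]|.
  by apply: eq_card => i; rewrite !inE permE.
rewrite T.
have -> : #|[set j | (q^-1)%g j == j]| = #|[set j | q j == j]|.
  apply: eq_card => j; rewrite !inE.
  by apply/eqP/eqP => [Ej | Ej]; [rewrite -{1}Ej permKV | rewrite -{1}Ej permK].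
rewrite -(card_imset _ (can_inj (@irr_classK _ G))); apply: eq_card => C.
rewrite inE; apply/imsetP/andP => [[j] | [CG /eqP EC]].
  rewrite inE permE /= => /eqP qj ->; rewrite irr_classP; split => //.
  by rewrite -{2}qj class_IirrK ?cl_classes ?irr_classP.
exists (class_Iirr G C); last by rewrite class_IirrK.
by rewrite inE permE /= class_IirrK // EC.
Qed.
End Char.
Section Codes.
Local Open Scope nat_scope.
Definition Perm4 : seq (seq nat) := permutations (iota 0 4).
Definition idl : seq nat := iota 0 4.
Definition comp (a b : seq nat) := map (nth 0 b) a.
Fixpoint cpow (a : seq nat) (i : nat) := if i is i'.+1 then comp a (cpow a i') else idl.
Definition cfix (a : seq nat) := count (fun i => nth 0 a i == i) (iota 0 4).
Definition fpf a := cfix a == 0.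
Definition c4 a := fpf a && (comp a a != idl).
Definition comm a b := comp a b == comp b a.
Definition gen2 a b h := has (fun i => has (fun j => h == comp (cpow a i) (cpow b j)) (iota 0 4)) (iota 0 4).
Definition K4c : seq (seq nat) := [:: idl; [:: 1; 0; 3; 2]; [:: 2; 3; 0; 1]; [:: 3; 2; 1; 0]].
Definition code (p : 'S_4) : seq nat := [:: nat_of_ord (p (o4 0)); nat_of_ord (p (o4 1)); nat_of_ord (p (o4 2)); nat_of_ord (p (o4 3))].
Definition o4s : seq 'I_4 := [:: o4 0; o4 1; o4 2; o4 3].
Lemma o4K k : k < 4 -> nat_of_ord (o4 k) = k.
Proof. by move=> lt; rewrite /o4 inordK. Qed.
Lemma ord4E (i : 'I_4) : i = o4 (val i).
Proof. by rewrite /o4 inord_val. Qed.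
Lemma nth_code p (i : 'I_4) : nth 0 (code p) i = p i.
Proof. by rewrite {2}(ord4E i); case: i => [[|[|[|[|m]]]] Hi]. Qed.
Lemma code_mul (p q : 'S_4) : code (p * q)%g = comp (code p) (code q).
Proof. by rewrite /code /comp /= !permM !nth_code. Qed.
Lemma code1 : code 1%g = idl.
Proof. by rewrite /code !perm1 /= !o4K. Qed.
Lemma code_exp p i : code (p ^+ i)%g = cpow (code p) i.
Proof. by elim: i => [|i IH]; rewrite ?expg0 ?code1 // expgS code_mul IH. Qed.
Lemma code_inj : injective code.
Proof.
move=> p q E; apply/permP => i; apply/eqP; rewrite -val_eqE /=.
by rewrite -!nth_code E.
Qed.
Lemma o4s_all (i : 'I_4) : i \in o4s.
Proof.
case: i => [[|[|[|[|m]]]] Hi] //; rewrite (ord4E (Ordinal Hi)) /= !inE eqxx ?orbT //.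
Qed.
Lemma code_P4 p : code p \in Perm4.
Proof.
rewrite mem_permutations.
have -> : code p = map (fun i => val (p i)) o4s by [].
apply: uniq_perm; last first.
- move=> x; rewrite mem_iota add0n leq0n andTb; apply/mapP/idP => [[i _ ->] | lt].
    exact: ltn_ord.
  exists ((p^-1)%g (Ordinal lt)); first exact: o4s_all.
  by rewrite permKV.
- by rewrite iota_uniq.
rewrite map_inj_uniq; last by move=> a b /val_inj /perm_inj.
by rewrite /= !inE -!val_eqE /= !o4K.
Qed.
Lemma cfix_code p : cfix (code p) = #|[set i : 'I_4 | p i == i]|.
Proof.
rewrite cardE size_filter -enumT /cfix -val_enum_ord count_map.
apply: eq_count => i /=; rewrite nth_code inE; exact: val_eqE.
Qed.
Lemma fix_code p (i : 'I_4) : (nth 0 (code p) i == i) = (p i == i).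
Proof. by rewrite nth_code val_eqE. Qed.
Lemma klein_code s : (s \in Klein4) = (code s \in K4c).
Proof.
have E1 : code (tperm (o4 0) (o4 1) * tperm (o4 2) (o4 3))%g = [:: 1; 0; 3; 2].
  by rewrite code_mul /code !permE /= -!val_eqE /= !o4K.
have E2 : code (tperm (o4 0) (o4 2) * tperm (o4 1) (o4 3))%g = [:: 2; 3; 0; 1].
  by rewrite code_mul /code !permE /= -!val_eqE /= !o4K.
have E3 : code (tperm (o4 0) (o4 3) * tperm (o4 1) (o4 2))%g = [:: 3; 2; 1; 0].
  by rewrite code_mul /code !permE /= -!val_eqE /= !o4K.
rewrite /Klein4 !inE -!(inj_eq code_inj) E1 E2 E3 code1.
by rewrite -!orbA.
Qed.
Definition B1 := all (fun h1 => all (fun h2 => all (fun j =>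
  comm h1 h2 ==> (nth 0 h1 0 != 0) ==> (nth 0 h1 j == j) ==> (nth 0 h2 j != j) ==> (fpf h2 || fpf (comp h1 h2))) (iota 0 4)) Perm4) Perm4.
Lemma B1P : B1. Proof. vm_compute. reflexivity. Qed.
Definition B2 := all (fun c => all (fun g => c4 c ==> comm c g ==> gen2 c c g) Perm4) Perm4.
Lemma B2P : B2. Proof. vm_compute. reflexivity. Qed.
Definition B3 := all (fun c => all (fun h => fpf c ==> ~~ c4 c ==> comm c h ==> ~~ c4 h ==> ~~ gen2 c c h ==> (fpf h || (cfix h == 2))) Perm4) Perm4.
Lemma B3P : B3. Proof. vm_compute. reflexivity. Qed.
Definition B3a := all (fun c => all (fun h => fpf c ==> ~~ c4 c ==> comm c h ==> ~~ c4 h ==> ~~ gen2 c c h ==> fpf h ==> all (fun k => k \in [:: idl; c; h; comp c h]) K4c) Perm4) Perm4.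
Lemma B3aP : B3a. Proof. vm_compute. reflexivity. Qed.
Definition B4 := all (fun c => all (fun h => all (fun g => fpf c ==> ~~ c4 c ==> comm c h ==> ~~ c4 h ==> ~~ gen2 c c h ==> fpf h ==> comm g c ==> comm g h ==> (g \in K4c)) Perm4) Perm4) Perm4.
Lemma B4P : B4. Proof. vm_compute. reflexivity. Qed.
Definition B5 := all (fun c => all (fun h => all (fun g => fpf c ==> ~~ c4 c ==> comm c h ==> (cfix h == 2) ==> comm g c ==> comm g h ==> [&& gen2 h c g, gen2 h (comp h c) g, gen2 c (comp h c) g & cfix (comp h c) == 2]) Perm4) Perm4) Perm4.
Lemma B5P : B5. Proof. vm_compute. reflexivity. Qed.

Lemma gen2_code a b h : gen2 (code a) (code b) (code h) -> exists i j, h = (a ^+ i * b ^+ j)%g.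
Proof.
case/hasP => i _ /hasP [j _ /eqP E]; exists i, j; apply: code_inj.
by rewrite code_mul !code_exp.
Qed.
Lemma comm_code (a b : 'S_4) : commute a b -> comm (code a) (code b).
Proof. by rewrite /comm -!code_mul => ->. Qed.
Lemma fpf_code p : fpf (code p) = (#|[set i : 'I_4 | p i == i]| == 0).
Proof. by rewrite /fpf cfix_code. Qed.

Lemma B1' (h1 h2 : 'S_4) (j : nat) : j < 4 -> comm (code h1) (code h2) ->
  nth 0 (code h1) 0 != 0 -> nth 0 (code h1) j == j -> nth 0 (code h2) j != j ->
  fpf (code h2) || fpf (comp (code h1) (code h2)).
Proof.
move=> lj a b c d; have := B1P.
move=> /allP /(_ _ (code_P4 h1)) /allP /(_ _ (code_P4 h2)) /allP /(_ j).
by rewrite mem_iota lj a b c d => /(_ isT).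
Qed.

Lemma B2' (c g : 'S_4) : c4 (code c) -> comm (code c) (code g) -> gen2 (code c) (code c) (code g).
Proof.
move=> a b; have := B2P.
move=> /allP /(_ _ (code_P4 c)) /allP /(_ _ (code_P4 g)).
by rewrite a b.
Qed.

Lemma B3' (c h : 'S_4) : fpf (code c) -> ~~ c4 (code c) -> comm (code c) (code h) ->
  ~~ c4 (code h) -> ~~ gen2 (code c) (code c) (code h) -> fpf (code h) || (cfix (code h) == 2).
Proof.
move=> a b d f g; have := B3P.
move=> /allP /(_ _ (code_P4 c)) /allP /(_ _ (code_P4 h)).
by rewrite a b d f g.
Qed.

Lemma B3a' (c h : 'S_4) : fpf (code c) -> ~~ c4 (code c) -> comm (code c) (code h) ->
  ~~ c4 (code h) -> ~~ gen2 (code c) (code c) (code h) -> fpf (code h) ->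
  all (fun k => k \in [:: idl; code c; code h; comp (code c) (code h)]) K4c.
Proof.
move=> a b d f g i; have := B3aP.
move=> /allP /(_ _ (code_P4 c)) /allP /(_ _ (code_P4 h)).
by rewrite a b d f g i.
Qed.

Lemma B4' (c h g : 'S_4) : fpf (code c) -> ~~ c4 (code c) -> comm (code c) (code h) ->
  ~~ c4 (code h) -> ~~ gen2 (code c) (code c) (code h) -> fpf (code h) ->
  comm (code g) (code c) -> comm (code g) (code h) -> code g \in K4c.
Proof.
move=> a b d f i j k l; have := B4P.
move=> /allP /(_ _ (code_P4 c)) /allP /(_ _ (code_P4 h)) /allP /(_ _ (code_P4 g)).
by rewrite a b d f i j k l.
Qed.

Lemma B5' (c h g : 'S_4) : fpf (code c) -> ~~ c4 (code c) -> comm (code c) (code h) ->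
  cfix (code h) == 2 -> comm (code g) (code c) -> comm (code g) (code h) ->
  [&& gen2 (code h) (code c) (code g), gen2 (code h) (comp (code h) (code c)) (code g),
      gen2 (code c) (comp (code h) (code c)) (code g) & cfix (comp (code h) (code c)) == 2].
Proof.
move=> a b d f i j; have := B5P.
move=> /allP /(_ _ (code_P4 c)) /allP /(_ _ (code_P4 h)) /allP /(_ _ (code_P4 g)).
by rewrite a b d f i j.
Qed.

End Codes.

From mathcomp Require Import zify.
Section Main.
Variables (gT : finGroupType) (G : {group gT}) (e : 'I_4 -> {set gT}).
Hypotheses (card4 : #|irr_classes G| = 4%N) (e_inj : injective e)
  (eY : forall i, e i \in irr_classes G).
Local Notation n := (exponent G).

Lemma eC i : e i \in classes G.
Proof. by have := eY i; rewrite inE => /andP []. Qed.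

Lemma e_surj C : C \in irr_classes G -> exists i, e i = C.
Proof.
have sub : e @: setT \subset irr_classes G.
  by apply/subsetP => _ /imsetP [i _ ->]; exact: eY.
have cE : #|e @: setT| = #|irr_classes G|.
  by rewrite card_imset // cardsT card_ord card4.
move/(subset_cardP cE): sub => <- /imsetP [i _ ->]; by exists i.
Qed.

Lemma clY k C : coprime k n -> C \in irr_classes G -> cl G k C \in irr_classes G.
Proof.
move=> cop; rewrite !inE => /andP [CG irC].
by rewrite cl_classes //= irr_cl.
Qed.

Definition tau k : 'S_4 := odflt 1%g [pick s : 'S_4 | [forall i, e (s i) == cl G k (e i)]].

Lemma tauE k : coprime k n -> forall i, e (tau k i) = cl G k (e i).
Proof.
move=> cop.
have /fin_all_exists [f Hf] : forall i, exists j, e j = cl G k (e i).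
  by move=> i; apply: e_surj; apply: clY => //; exact: eY.
have finj : injective f.
  move=> i j E; apply: e_inj; apply: (cl_inj cop); rewrite ?eC //.
  by rewrite -!Hf E.
rewrite /tau; case: pickP => [s /forallP Hs | /(_ (perm finj))]; last first.
  by move/forallP => []; move=> i; rewrite permE Hf.
by move=> i; apply/eqP/Hs.
Qed.

Lemma tauM k k' : coprime k n -> coprime k' n -> tau (k * k') = (tau k * tau k')%g.
Proof.
move=> c1 c2; apply/permP => i; apply: e_inj.
by rewrite permM !tauE ?coprimeMl ?c1 ?c2 // clM ?eC.
Qed.

Lemma tau1 : tau 1 = 1%g.
Proof. by apply/permP => i; apply: e_inj; rewrite tauE ?coprime1n // cl1 ?eC // perm1. Qed.

Lemma tau_exp k m : coprime k n -> tau (k ^ m) = (tau k ^+ m)%g.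
Proof.
move=> cop; elim: m => [|m IH]; first by rewrite expn0 tau1.
by rewrite expnS tauM ?coprimeXl // IH expgS.
Qed.

Lemma tau_mod k : coprime k n -> tau (k %% n) = tau k.
Proof.
move=> cop; apply/permP => i; apply: e_inj.
by rewrite !tauE ?coprime_modl // cl_mod ?eC.
Qed.

Lemma inH s : (s \in phi_image G e) = [exists k : 'I_n, coprime k n && (s == tau k)].
Proof.
rewrite inE; apply: eq_existsb => k; case cop: (coprime k n) => //=.
apply/forallP/eqP => [H | ->]; last by move=> i; rewrite tauE.
apply/permP => i; apply: e_inj; rewrite tauE //; exact/eqP/H.
Qed.

Lemma inH_nat k : coprime k n -> tau k \in phi_image G e.
Proof.
move=> cop; rewrite inH.
have lt : (k %% n < n)%N by rewrite ltn_mod exponent_gt0.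
apply/existsP; exists (Ordinal lt); rewrite /= coprime_modl cop /=.
by rewrite tau_mod.
Qed.

Lemma tau_sig k k' : coprime k n -> coprime k' n -> tau k = tau k' ->
  forall i, @sig _ G k i = @sig _ G k' i.
Proof.
move=> c1 c2 E i; apply: R10 => // C CG.
have [irC | ratC] := boolP (irrational_class G C); last by rewrite !R3.
have [j <-] : exists j, e j = C by apply: e_surj; rewrite inE CG.
by rewrite -!tauE // E.
Qed.

Lemma sig1 i : @sig _ G 1 i = i.
Proof. by apply: irr_inj; apply: cfun_inP => x Gx; rewrite sigE ?coprime1n // expg1. Qed.

Lemma sig_exp k m i : coprime k n -> @sig _ G k i = i -> @sig _ G (k ^ m) i = i.
Proof.
move=> cop Hk; elim: m => [|m IH]; first by rewrite expn0 sig1.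
by rewrite expnS sigM ?coprimeXl // IH.
Qed.

Lemma G1 k1 k2 i : coprime k1 n -> coprime k2 n -> @sig _ G k1 i = i -> @sig _ G k2 i = i ->
  (forall r : 'I_n, coprime r n -> exists a b, tau r = (tau k1 ^+ a * tau k2 ^+ b)%g) ->
  ~~ irrational_char G i.
Proof.
move=> c1 c2 f1 f2 H; apply/negP => /R2 [r /andP [cop ne]].
have [a [b E]] := H r cop.
rewrite -!tau_exp // -tauM ?coprimeXl // in E.
move: ne; rewrite (tau_sig cop _ E) ?coprimeMl ?coprimeXl //.
by rewrite sigM ?coprimeXl // !sig_exp // eqxx.
Qed.


Definition Xs := [set i : Iirr G | irrational_char G i].
Definition fX k := #|[set i in Xs | @sig _ G k i == i]|.
Definition Rx := #|[set i : Iirr G | ~~ irrational_char G i]|.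
Definition Rc := #|[set C in classes G | ~~ irrational_class G C]|.

Lemma Ek k : coprime k n -> (fX k + Rx = #|[set i : 'I_4 | tau k i == i]| + Rc)%N.
Proof.
move=> cop; have := P5 cop.
rewrite -(cardsID Xs [set i | @sig _ G k i == i]).
rewrite -(cardsID (irr_classes G) [set C in classes G | cl G k C == C]).
have -> : [set i | @sig _ G k i == i] :&: Xs = [set i in Xs | @sig _ G k i == i].
  by apply/setP => i; rewrite !inE andbC.
have -> : [set i | @sig _ G k i == i] :\: Xs = [set i : Iirr G | ~~ irrational_char G i].
  apply/setP => i; rewrite !inE; case: (boolP (irrational_char G i)) => //= ri.
  by rewrite R1 ?eqxx.
have -> : [set C in classes G | cl G k C == C] :\: irr_classes G =
          [set C in classes G | ~~ irrational_class G C].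
  apply/setP => C; rewrite !inE; case CG: (C \in classes G); rewrite ?andbF //=.
  by case: (boolP (irrational_class G C)) => //= rC; rewrite R3 ?eqxx.
have -> : [set C in classes G | cl G k C == C] :&: irr_classes G = e @: [set i | tau k i == i].
  apply/setP => C; rewrite in_setI; apply/idP/imsetP.
    move=> /andP [H1 YC]; move: H1; rewrite inE => /andP [CG /eqP E].
    have [i Ei] := e_surj YC.
    exists i; last by rewrite Ei.
    rewrite in_set; apply/eqP; apply: e_inj; by rewrite tauE // Ei E.
  case=> i; rewrite !inE => /eqP Ti ->.
  have := eY i; rewrite inE => /andP [_ ir]; by rewrite eC ir -tauE // Ti eqxx.
by rewrite card_imset.
Qed.

Lemma fX1 : fX 1 = #|Xs|.
Proof. by apply: eq_card => i; rewrite !inE sig1 eqxx andbT. Qed.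

Lemma Cyc k : coprime k n -> fpf (code (tau k)) ->
  (forall r : 'I_n, coprime r n -> gen2 (code (tau k)) (code (tau k)) (code (tau r))) -> Rx = Rc.
Proof.
move=> cop f H; have := Ek cop; rewrite -cfix_code (eqP f) add0n.
suff -> : fX k = 0%N by [].
apply/eqP; rewrite cards_eq0; apply/eqP/setP => i; rewrite !inE.
apply/negP => /andP [Xi /eqP si].
move: Xi; apply/negP; apply: (G1 cop cop si si) => r cr; exact: gen2_code (H r cr).
Qed.

Lemma card3 (T : finType) (A B C D : {set T}) : A \subset D -> B \subset D -> C \subset D ->
  A :&: B = set0 -> A :&: C = set0 -> B :&: C = set0 -> (#|A| + #|B| + #|C| <= #|D|)%N.
Proof.
move=> sA sB sC AB AC BC.
have e1 := cardsUI A B; rewrite AB cards0 addn0 in e1.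
have e2 := cardsUI (A :|: B) C; rewrite setIUl AC BC setU0 cards0 addn0 e1 in e2.
by rewrite -e2; apply: subset_leq_card; rewrite !subUset sA sB sC.
Qed.

Lemma V2 ka kc : coprime ka n -> coprime kc n -> cfix (code (tau ka)) = 2%N ->
  cfix (code (tau (ka * kc))) = 2%N -> fpf (code (tau kc)) ->
  (forall r : 'I_n, coprime r n -> [&& gen2 (code (tau ka)) (code (tau kc)) (code (tau r)),
       gen2 (code (tau ka)) (code (tau (ka * kc))) (code (tau r)) &
       gen2 (code (tau kc)) (code (tau (ka * kc))) (code (tau r))]) -> Rx = Rc.
Proof.
move=> ca cc fa fb fc H.
have cb : coprime (ka * kc) n by rewrite coprimeMl ca cc.
have Ea := Ek ca; have Eb := Ek cb; have Ec := Ek cc; have E1 := Ek (coprime1n n).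
rewrite -!cfix_code in Ea Eb Ec E1.
rewrite fa in Ea; rewrite fb in Eb; rewrite (eqP fc) in Ec; rewrite tau1 code1 fX1 in E1.
have sub k : [set i in Xs | @sig _ G k i == i] \subset Xs.
  by apply/subsetP => i; rewrite inE => /andP [].
have dis k1 k2 : coprime k1 n -> coprime k2 n ->
   (forall r : 'I_n, coprime r n -> exists a b, tau r = (tau k1 ^+ a * tau k2 ^+ b)%g) ->
   [set i in Xs | @sig _ G k1 i == i] :&: [set i in Xs | @sig _ G k2 i == i] = set0.
  move=> c1 c2 HH; apply/setP => i; rewrite !inE.
  apply/negP => /andP [/andP [Xi /eqP s1] /andP [_ /eqP s2]].
  by move: Xi; apply/negP; apply: (G1 c1 c2 s1 s2).
have dAB := dis _ _ ca cb (fun r cr => gen2_code (let: And3 _ h _ := and3P (H r cr) in h)).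
have dAC := dis _ _ ca cc (fun r cr => gen2_code (let: And3 h _ _ := and3P (H r cr) in h)).
have dCB := dis _ _ cc cb (fun r cr => gen2_code (let: And3 _ _ h := and3P (H r cr) in h)).
rewrite setIC in dCB.
have le := card3 (sub ka) (sub (ka * kc)%N) (sub kc) dAB dAC dCB.
have c4e : cfix idl = 4%N by [].
rewrite c4e in E1; rewrite /fX in Ea Eb Ec.
lia.
Qed.

Lemma main_sec : phi_image G e != Klein4 -> #|Xs| = 4%N.
Proof.
move=> nK.
have E1 := Ek (coprime1n n).
rewrite tau1 fX1 -cfix_code code1 in E1.
have c4e : cfix idl = 4%N by [].
rewrite c4e in E1.
suff : Rx = Rc by lia.
have moved : forall j : 'I_4, exists r : 'I_n, coprime r n && (tau r j != j).
  move=> j; have := eY j; rewrite inE => /andP [_ /R4 [r /andP [cr ne]]].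
  exists r; rewrite cr /=; apply: contra ne => /eqP tj.
  by rewrite -tauE // tj.
have commH : forall r r', coprime r n -> coprime r' n -> comm (code (tau r)) (code (tau r')).
  by move=> r r' c1 c2; apply: comm_code; rewrite /commute -!tauM // mulnC.
have [/existsP [r /andP [cr c4r]] | no4] :=
  boolP [exists r : 'I_n, coprime r n && c4 (code (tau r))].
  apply: (Cyc cr); first by case/andP: c4r.
  by move=> r' cr'; apply: B2' c4r (commH _ _ cr cr').
have no4' : forall r, coprime r n -> ~~ c4 (code (tau r)).
  move=> r cr; rewrite -tau_mod //; apply: contra no4 => h.
  have lt : (r %% n < n)%N by rewrite ltn_mod exponent_gt0.
  by apply/existsP; exists (Ordinal lt); rewrite /= coprime_modl cr h.
have [kc [cc fc]] : exists kc, coprime kc n /\ fpf (code (tau kc)).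
  have [r1 /andP [c1 m1]] := moved (o4 0).
  case f1: (fpf (code (tau r1))); first by exists (nat_of_ord r1).
  have : has (fun i => nth 0 (code (tau r1)) i == i) (iota 0 4).
    by rewrite has_count lt0n; move: f1; rewrite /fpf /cfix => /negbT.
  case/hasP => j; rewrite mem_iota add0n => /andP [_ lj] fj.
  have [r2 /andP [c2 m2]] := moved (o4 j).
  have m1' : nth 0 (code (tau r1)) 0 != 0%N.
    by have := fix_code (tau r1) (o4 0); rewrite o4K // => ->.
  have m2' : nth 0 (code (tau r2)) j != j.
    by have := fix_code (tau r2) (o4 j); rewrite o4K // => ->.
  have := B1' lj (commH _ _ c1 c2) m1' fj m2'.
  case/orP => [f2 | f12]; first by exists (nat_of_ord r2).
  exists (r1 * r2)%N; split; first by rewrite coprimeMl c1 c2.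
  by rewrite tauM // code_mul.
have [/forallP allg | /forallPn [r]] :=
  boolP [forall r : 'I_n, coprime r n ==> gen2 (code (tau kc)) (code (tau kc)) (code (tau r))].
  by apply: (Cyc cc fc) => r cr; exact: (implyP (allg r) cr).
rewrite negb_imply => /andP [cr ng].
have := B3' fc (no4' _ cc) (commH _ _ cc cr) (no4' _ cr) ng.
case/orP => [fh | ch].
  exfalso; move/eqP: nK; apply.
  have A3 := B3a' fc (no4' _ cc) (commH _ _ cc cr) (no4' _ cr) ng fh.
  apply/setP => s; rewrite inH klein_code; apply/idP/idP.
    case/existsP => r' /andP [cr' /eqP ->].
    exact: B4' fc (no4' _ cc) (commH _ _ cc cr) (no4' _ cr) ng fh
      (commH _ _ cr' cc) (commH _ _ cr' cr).
  move=> sK; move/allP: A3 => /(_ _ sK) Hm; rewrite -inH; move: Hm.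
  rewrite !in_cons in_nil orbF => /or4P [] /eqP E.
  - by rewrite -code1 in E; rewrite (code_inj E) -tau1 inH_nat ?coprime1n.
  - by rewrite (code_inj E) inH_nat.
  - by rewrite (code_inj E) inH_nat.
  - by rewrite -code_mul in E; rewrite (code_inj E) -tauM // inH_nat // coprimeMl cc cr.
have B r' (cr' : coprime r' n) :=
  B5' fc (no4' _ cc) (commH _ _ cc cr) ch (commH _ _ cr' cc) (commH _ _ cr' cr).
have ecomp : comp (code (tau r)) (code (tau kc)) = code (tau (r * kc)%N).
  by rewrite tauM // code_mul.
apply: (V2 cr cc (eqP ch)).
- by case/and4P: (B _ cr) => _ _ _; rewrite ecomp => /eqP.
- exact: fc.
move=> r' cr'; case/and4P: (B _ cr'); rewrite ecomp => g1 g2 g3 _.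
by rewrite g1 g2 g3.
Qed.
End Main.

Local Close Scope ring_scope.
Local Close Scope group_scope.

Theorem mainTheorem9 (gT : finGroupType) (G : {group gT}) (e : 'I_4 -> {set gT}) :
  #|irr_classes G| = 4 ->
  injective e ->
  (forall i, e i \in irr_classes G) ->
  phi_image G e != Klein4 ->
  #|[set i : Iirr G | irrational_char G i]| = 4.
Proof. by move=> c4 ei eY nK; apply: (main_sec c4 ei eY nK). Qed.
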